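(* Let $H\in(0,1)$ and let $B^H$ be a fractional Brownian motion on $[0,1]$ with Hurst index $H$. Fix $n\ge1$ and let $\gamma_n$ be the maximal absolute value of the entries of the vector $\boldsymbol\Sigma_n^{-1}\mathbf{B}^H_n$. Then for all $m\ge1$ and $1\le k\le 2^{n+m-1}$, $$|\mu_n(m,k)|\le \gamma_n\cdot(2^n+1)\cdot 2^{-2(n+m)H}.$$
   Context: A fractional Brownian motion with Hurst index $H$ is a centered Gaussian process with $B^H(0)=0$ and covariance $r(s,t)=\mathbb{E}[B^H(s)B^H(t)]=\tfrac12(|s|^{2H}+|t|^{2H}-|s-t|^{2H})$. $t^n_i=i/2^n$, $\mathbf{B}^H_n=(B^H(t^n_0),\dots,B^H(t^n_{2^n}))$, $\boldsymbol\Sigma_n$ is the covariance matrix of $\mathbf{B}^H_n$ (which is singular since $B^H(0)=0$; $\boldsymbol\Sigma_n^{-1}$ denotes its generalized inverse, as in the paper). $\boldsymbol\alpha_n(m,k)=(B^H(t^{n+m}_{2k-2}),B^H(t^{n+m}_{2k-1}),B^H(t^{n+m}_{2k}))^\top$, $\boldsymbol\beta=(1/2,-1,1/2)^\top$, $\mu_n(m,k)=\boldsymbol\beta^\top\mathbb{E}[\boldsymbol\alpha_n(m,k)\mid\mathbf{B}^H_n]=\boldsymbol\beta^\top\boldsymbol\Sigma^{(m,k)}_n\boldsymbol\Sigma_n^{-1}\mathbf{B}^H_n$, where $\boldsymbol\Sigma^{(m,k)}_n$ is the $3\times(2^n+1)$ cross-covariance matrix of $\boldsymbol\alpha_n(m,k)$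 and $\mathbf{B}^H_n$. *)

(* Defs.v *)
From HB Require Import structures.
From mathcomp Require Import all_boot all_order all_algebra.
From mathcomp Require Import all_classical all_reals all_analysis.
Unset Printing Implicit Defensive.
Import Order.TTheory GRing.Theory Num.Theory.
Local Open Scope classical_set_scope.
Local Open Scope ring_scope.

Definition fbm_cov {R : realType} (H s t : R) : R :=
  (`|s| `^ (2 * H) + `|t| `^ (2 * H) - `|s - t| `^ (2 * H)) / 2.

Definition centered_gauss_law {R : realType} (v : R) (A : set R) : \bar R :=
  if v == 0 then (\1_A (0:R))%:E else normal_prob 0 (Num.sqrt v) A.

(* B is a fractional Brownian motion on [0,1] with Hurst index H under P:
   B(0) = 0, each B t is a random variable, and B is a centered Gaussian
   process with covariance fbm_cov H, i.e. every finite linear combination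
   sum_i c_i B(t_i) is centered Gaussian with variance
   sum_{i,j} c_i c_j r(t_i,t_j). *)
Definition is_fbm {d} {T : measurableType d} {R : realType}
  (P : probability T R) (H : R) (B : R -> T -> R) : Prop :=
  (forall w, B 0 w = 0) /\
  (forall t, 0 <= t <= 1 -> measurable_fun setT (B t)) /\
  (forall (K : nat) (c t : 'I_K -> R), (forall i, 0 <= t i <= 1) ->
     forall A : set R, measurable A ->
       P ((fun w => \sum_(i < K) c i * B (t i) w) @^-1` A) =
       centered_gauss_law (\sum_(i < K) \sum_(j < K) c i * c j * fbm_cov H (t i) (t j)) A).

Definition dyad {R : realType} (n i : nat) : R := i%:R / (2 ^ n)%:R.

Definition Sigma_n {R : realType} (H : R) (n : nat) : 'M[R]_((2 ^ n).+1) :=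
  \matrix_(i, j) fbm_cov H (dyad n i) (dyad n j).

Definition Bvec {T : Type} {R : realType} (B : R -> T -> R) (n : nat) (w : T)
  : 'cV[R]_((2 ^ n).+1) := \col_i B (dyad n i) w.

(* Sigma^{(m,k)}_n : cross-covariance of alpha_n(m,k) = (B(t^{n+m}_{2k-2}),
   B(t^{n+m}_{2k-1}), B(t^{n+m}_{2k}))^T with B^H_n *)
Definition Sigma_mk {R : realType} (H : R) (n m k : nat) : 'M[R]_(3, (2 ^ n).+1) :=
  \matrix_(l < 3, j < (2 ^ n).+1) fbm_cov H (dyad (n + m) (2 * k - 2 + l)) (dyad n j).

Definition beta_row {R : realType} : 'rV[R]_3 :=
  \row_(l < 3) (if l == 1 :> nat then -1 else 1 / 2).

Definition is_ginv {R : realType} {N : nat} (S G : 'M[R]_N) : Prop :=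
  S *m G *m S = S.

Definition mu_nmk {T : Type} {R : realType} (H : R) (B : R -> T -> R)
  (n m k : nat) (G : 'M[R]_((2 ^ n).+1)) (w : T) : R :=
  (beta_row *m Sigma_mk H n m k *m G *m Bvec B n w) 0 0.

Definition gamma_n {T : Type} {R : realType} (B : R -> T -> R) (n : nat)
  (G : 'M[R]_((2 ^ n).+1)) (w : T) : R :=
  \big[Num.max/0]_(j < (2 ^ n).+1) `|(G *m Bvec B n w) j 0|.

(* Main.v *)
Require Import Defs.
From HB Require Import structures.
From mathcomp Require Import all_boot all_order all_algebra.
From mathcomp Require Import all_classical all_reals all_analysis.
From mathcomp Require Import ring lra.
Import Order.TTheory GRing.Theory Num.Theory.
Local Open Scope ring_scope.

Local Open Scope convex_scope.
Section aux.
Context {R : realType}.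

Lemma mid_convex (p x y : R) : 1 <= p -> 0 <= x -> 0 <= y ->
  (2^-1 * x + 2^-1 * y) `^ p <= 2^-1 * x `^ p + 2^-1 * y `^ p.
Proof.
move=> p1 x0 y0.
rewrite {2 4}(_ : 2^-1 = 1 - 2^-1 :> R); last by rewrite {2}(splitr 1) div1r addrK.
by apply: (convex_powR p1 (Itv01 _ _)) => //=;
  rewrite ?inE/= ?in_itv/= ?andbT // ?invr_ge0// invf_le1 ?ler1n.
Qed.

Lemma subadd_powR (q x y : R) : 0 < q -> q <= 1 -> 0 <= x -> 0 <= y ->
  (x + y) `^ q <= x `^ q + y `^ q.
Proof.
move=> q0 q1 x0 y0.
have [S0|Sn0] := eqVneq (x + y) 0.
  have -> : x = 0 by lra.
  have -> : y = 0 by lra.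
  by rewrite addr0 powR0 ?gt_eqF // addr0.
have Sp : 0 < x + y by rewrite lt_neqAle eq_sym Sn0 addr_ge0.
set S := x + y in Sp Sn0 *.
have ha : forall a : R, 0 <= a <= 1 -> a <= a `^ q.
  move=> a /andP[a0 a1]; have [->|an0] := eqVneq a 0; first by rewrite powR_ge0.
  by apply: ger1_powR => //; rewrite a1 andbT lt_neqAle eq_sym an0.
have hx1 : x / S <= 1 by rewrite ler_pdivrMr // mul1r /S; lra.
have hy1 : y / S <= 1 by rewrite ler_pdivrMr // mul1r /S; lra.
have hs : x / S + y / S = 1 by rewrite -mulrDl divff.
have H1 : x / S <= (x / S) `^ q by apply: ha; rewrite hx1 divr_ge0 // ltW.
have H2 : y / S <= (y / S) `^ q by apply: ha; rewrite hy1 divr_ge0 // ltW.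
have ex : x `^ q = (x / S) `^ q * S `^ q by rewrite -powRM ?divfK // ?divr_ge0 // ltW.
have ey : y `^ q = (y / S) `^ q * S `^ q by rewrite -powRM ?divfK // ?divr_ge0 // ltW.
have Sq : 0 <= S `^ q by rewrite powR_ge0.
have hab : 1 <= (x / S) `^ q + (y / S) `^ q by lra.
rewrite ex ey -mulrDl; rewrite -{1}(mul1r (S `^ q)); exact: ler_wpM2r.
Qed.

Lemma mid_concave (q x y : R) : 0 < q -> q <= 1 -> 0 <= x -> 0 <= y ->
  2^-1 * x `^ q + 2^-1 * y `^ q <= (2^-1 * x + 2^-1 * y) `^ q.
Proof.
move=> q0 q1 x0 y0.
have P1 : 1 <= q^-1 by rewrite invf_ge1.
have hX : (x `^ q) `^ q^-1 = x by rewrite -powRrM mulfV ?gt_eqF // powRr1.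
have hY : (y `^ q) `^ q^-1 = y by rewrite -powRrM mulfV ?gt_eqF // powRr1.
have := @mid_convex (q^-1) _ _ P1 (powR_ge0 x q) (powR_ge0 y q).
rewrite hX hY => h.
have h2 := ge0_ler_powR (ltW q0) _ _ h.
rewrite -powRrM mulVf ?gt_eqF // powRr1 in h2.
  apply: h2; rewrite nnegrE ?powR_ge0 //.
  have i2 : (0:R) <= 2^-1 by rewrite invr_ge0.
  by rewrite addr_ge0 // mulr_ge0.
have i2 : (0:R) <= 2^-1 by rewrite invr_ge0.
by rewrite addr_ge0 // mulr_ge0 // powR_ge0.
Qed.

Lemma keyK (p s : R) : 0 < p -> p < 2 -> 1 <= s ->
  `| (s - 1) `^ p + (s + 1) `^ p - 2 * s `^ p | <= 2.
Proof.
move=> p0 p2 s1.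
have sm0 : 0 <= s - 1 by lra.
have s0 : 0 <= s by lra.
have sp0 : 0 <= s + 1 by lra.
have [p1|p1] := leP p 1.
  have u0 : s `^ p <= (s + 1) `^ p by apply: ge0_ler_powR; rewrite ?nnegrE; lra.
  have u1 : (s + 1) `^ p <= s `^ p + 1.
    by have := @subadd_powR p s 1 p0 p1 s0 ler01; rewrite powR1.
  have v0 : (s - 1) `^ p <= s `^ p by apply: ge0_ler_powR; rewrite ?nnegrE; lra.
  have v1 : s `^ p <= (s - 1) `^ p + 1.
    have := @subadd_powR p (s-1) 1 p0 p1 sm0 ler01; rewrite powR1.
    by rewrite subrK.
  rewrite ler_norml; apply/andP; split; lra.
set q := p - 1.
have q0 : 0 < q by rewrite /q; lra.
have q1 : q <= 1 by rewrite /q; lra.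
have lo : 2^-1 * (s - 1) `^ p + 2^-1 * (s + 1) `^ p >= (2^-1 * (s - 1) + 2^-1 * (s + 1)) `^ p.
  by apply: mid_convex => //; lra.
have e1 : 2^-1 * (s - 1) + 2^-1 * (s + 1) = s by field.
rewrite e1 in lo.
have c1 := @mid_concave q _ _ q0 q1 sm0 sp0.
rewrite e1 in c1.
have sa : (s + 1) `^ q <= (s - 1) `^ q + 2 `^ q.
  have := @subadd_powR q (s-1) 2 q0 q1 sm0 (ler0n R 2).
  by have -> : s - 1 + 2 = s + 1 by ring.
have t2 : (2:R) `^ q <= 2 by apply: ler1_powR => //; lra.
have ep a : 0 <= a -> a `^ p = a * a `^ q.
  by move=> a0; rewrite mulr_powRB1.
rewrite (ep _ sm0) (ep _ s0) (ep _ sp0).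
rewrite (ep _ sm0) (ep _ s0) (ep _ sp0) in lo.
have Q0 := powR_ge0 (s - 1) q.
rewrite ler_norml; apply/andP; split; first lra.
nra.
Qed.

Lemma keyK' (p x : R) : 0 < p -> p < 2 -> 1 <= `|x| ->
  `| `|x - 1| `^ p + `|x + 1| `^ p - 2 * `|x| `^ p | <= 2.
Proof.
move=> p0 p2; have [x0|x0] := leP 0 x.
  rewrite (ger0_norm x0) => x1.
  have e1 : `|x - 1| = x - 1 by apply: ger0_norm; lra.
  have e2 : `|x + 1| = x + 1 by apply: ger0_norm; lra.
  rewrite e1 e2; exact: keyK.
rewrite (ltr0_norm x0) => x1.
have e1 : `|x - 1| = - x + 1 by rewrite ler0_norm; lra.
have e2 : `|x + 1| = - x - 1 by rewrite ler0_norm; lra.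
rewrite e1 e2 (addrC ((- x + 1) `^ p)).
exact: (@keyK p (- x) p0 p2 x1).
Qed.

End aux.

Local Close Scope convex_scope.

Section main.
Context {R : realType}.

Lemma powRV' (a p : R) : 0 < a -> (a^-1) `^ p = (a `^ p)^-1.
Proof.
move=> a0.
have h : (a^-1) `^ p * a `^ p = 1 by rewrite -powRM ?mulVf ?gt_eqF ?powR1 // ?invr_ge0 ltW.
have ap : 0 < a `^ p by apply: powR_gt0.
apply: (mulIf (lt0r_neq0 ap)); by rewrite h mulVf // gt_eqF.
Qed.

Lemma cov_scale (H h X Y : R) : 0 <= h ->
  fbm_cov H (X * h) (Y * h) =
  (`|X| `^ (2 * H) + `|Y| `^ (2 * H) - `|X - Y| `^ (2 * H)) * h `^ (2 * H) / 2.
Proof.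
move=> h0; rewrite /fbm_cov -mulrBl !normrM (ger0_norm h0) !powRM //.
by ring.
Qed.

Lemma parity_bound (u v : nat) : odd u -> ~~ odd v -> 1 <= `|u%:R - v%:R : R|.
Proof.
move=> ou ev; have [uv|vu|uv] := ltngtP u v.
- rewrite -normrN opprB -natrB; last exact: ltnW.
  by rewrite normr_nat ler1n subn_gt0.
- rewrite -natrB; last exact: ltnW.
  by rewrite normr_nat ler1n subn_gt0.
- by move: ou ev; rewrite uv => ->.
Qed.
Lemma coef_bound (H : R) (n m k : nat) (j : 'I_(2^n).+1) : 0 < H -> H < 1 ->
  (1 <= m)%N -> (1 <= k)%N ->
  `|(beta_row *m Sigma_mk H n m k) 0 j| <= (((2^(n+m))%:R : R)^-1) `^ (2 * H).
Proof.
move=> H0 H1 m1; case: k => [//|k'] _.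
set h : R := ((2^(n+m))%:R)^-1.
have h0 : 0 <= h by rewrite invr_ge0.
have dj : dyad n j = (j * 2^m)%:R * h.
  rewrite /dyad /h natrM expnD natrM.
  have n0 : (2 ^ n)%:R != 0 :> R by rewrite pnatr_eq0 expn_eq0.
  have m0 : (2 ^ m)%:R != 0 :> R by rewrite pnatr_eq0 expn_eq0.
  by field; rewrite n0 m0.
rewrite mxE !big_ord_recr big_ord0 /= add0r !mxE /=.
rewrite dj /dyad -/h.
set a : R := (2 * k')%:R.
set T : R := (j * 2 ^ m)%:R.
have ek : (2 * k'.+1 - 2 = 2 * k')%N by rewrite mulnS addKn.
have e0 : (2 * k'.+1 - 2 + 0)%:R = a :> R by rewrite ek addn0.
have e1 : (2 * k'.+1 - 2 + 1)%:R = a + 1 :> R by rewrite ek natrD.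
have e2 : (2 * k'.+1 - 2 + 2)%:R = a + 2 :> R by rewrite ek natrD.
rewrite e0 e1 e2 !cov_scale //.
have p0 : 0 < 2 * H by lra.
have p2 : 2 * H < 2 by lra.
have a0 : 0 <= a by rewrite /a ler0n.
have K1 := @keyK' R (2 * H) (a + 1) p0 p2 (ltac:(rewrite ger0_norm; lra)).
have odd1 : odd (2 * k').+1 by rewrite /= mul2n odd_double.
have odd2 : ~~ odd (j * 2 ^ m).
  have mn0 : (m == 0)%N = false by rewrite eqn0Ngt m1.
  by rewrite oddM oddX mn0 andbF.
have pb := parity_bound _ _ odd1 odd2.
rewrite -natr1 -/a -/T in pb.
have pb' : 1 <= `|a + 1 - T| by exact: pb.
have K2 := @keyK' R (2 * H) (a + 1 - T) p0 p2 pb'.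
have E1 : a + 1 - T - 1 = a - T by ring.
have E2 : a + 1 - T + 1 = a + 2 - T by ring.
have E3 : a + 1 - 1 = a by ring.
have E4 : a + 1 + 1 = a + 2 by ring.
rewrite E1 E2 in K2; rewrite E3 E4 in K1.
move: K1 K2.
set g0 := `|a| `^ (2 * H); set g1 := `|a + 1| `^ (2 * H); set g2 := `|a + 2| `^ (2 * H).
set f0 := `|a - T| `^ (2 * H); set f1 := `|a + 1 - T| `^ (2 * H).
set f2 := `|a + 2 - T| `^ (2 * H); set gT := `|T| `^ (2 * H).
set hp := h `^ (2 * H) => K1 K2.
have hp0 : 0 <= hp by rewrite /hp powR_ge0.
have -> : 1 / 2 * ((g0 + gT - f0) * hp / 2) + -1 * ((g1 + gT - f1) * hp / 2) +
    1 / 2 * ((g2 + gT - f2) * hp / 2) =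
    hp / 4 * ((g0 + g2 - 2 * g1) - (f0 + f2 - 2 * f1)) by field.
rewrite normrM (ger0_norm (_ : 0 <= hp / 4)); last by rewrite divr_ge0.
have D : `|(g0 + g2 - 2 * g1) - (f0 + f2 - 2 * f1)| <= 4.
  by rewrite (le_trans (ler_normB _ _)) //; lra.
have : hp / 4 * `|(g0 + g2 - 2 * g1) - (f0 + f2 - 2 * f1)| <= hp / 4 * 4.
  by rewrite ler_wpM2l // divr_ge0.
have -> : hp / 4 * 4 = hp by field.
done.
Qed.
End main.

Theorem lemma7 (d : measure_display) (T : measurableType d) (R : realType)
  (P : probability T R) (H : R) (B : R -> T -> R)
  (H0 : 0 < H) (H1 : H < 1) (hB : is_fbm P H B)
  (n : nat) (hn : (1 <= n)%N)
  (G : 'M[R]_((2 ^ n).+1)) (hG : is_ginv (Sigma_n H n) G) :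
  forall (m k : nat), (1 <= m)%N -> (1 <= k)%N -> (k <= expn 2 (n + m - 1))%N ->
  forall w : T,
    `|mu_nmk H B n m k G w| <=
      gamma_n B n G w * (2 ^ n + 1)%:R * (2 : R) `^ (- (2 * (n + m)%:R * H)).
Proof.
move=> m k m1 k1 _ w.
set v := G *m Bvec B n w.
have e : mu_nmk H B n m k G w =
    \sum_j (beta_row *m Sigma_mk H n m k) 0 j * v j 0.
  by rewrite /mu_nmk -mulmxA mxE.
set hp := (((2^(n+m))%:R : R)^-1) `^ (2 * H).
have hpE : (2:R) `^ (- (2 * (n + m)%:R * H)) = hp.
  rewrite (_ : - (2 * (n + m)%:R * H) = (n + m)%:R * (- (2 * H))); last by ring.
  rewrite powRrM powR_mulrn // -natrX powRN /hp powRV' //.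
rewrite e hpE.
apply: le_trans (ler_norm_sum _ _ _) _.
apply: (@le_trans _ _ (\sum_(j < (2^n).+1) hp * gamma_n B n G w)).
  apply: ler_sum => j _; rewrite normrM; apply: ler_pM => //.
  - exact: coef_bound.
  - exact: (le_bigmax _ (fun j => `|(G *m Bvec B n w) j 0|)).
rewrite sumr_const card_ord.
have -> : gamma_n B n G w * (2 ^ n + 1)%:R * hp = hp * gamma_n B n G w *+ (2^n).+1.
  by rewrite -mulr_natr addn1; ring.
done.
Qed.
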